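(* Assume (A1) and (A4). Consider Algorithm 2 with parameter choice (P1), and any inner iteration $k$ of any stage $s$. Set $\mu^k=\nabla\hat F_{i_k}(x^k)+A^T\lambda^{k+1}$. Then $x^{k+1}=x^k-\eta_sG_k^{-1}\mu^k$, and $$-2\eta_s\langle\mu^k,x^k-x^*\rangle+\eta_s^2\|\mu^k\|_{G_k^{-1}}^2\le-2\eta_s\big(F(x^{k+1})-F(x^* )\big)-2\eta_s\langle\nabla\hat F_{i_k}(x^k)-\nabla F(x^k),x^{k+1}-x^*\rangle+2\eta_s\langle A^T\lambda^{k+1},x^*-x^{k+1}\rangle.$$
   Context: Standing setup. Let $n,m,p,q,r,l\ge1$. For $j\in\{1,\dots,m\}$ let $g_j:\mathbb R^q\to\mathbb R^r$ be continuously differentiable with Jacobian $\partial g_j(x)\in\mathbb R^{r\times q}$; for $i\in\{1,\dots,n\}$ let $f_i:\mathbb R^r\to\mathbb R$ be continuously differentiable. Set $g(x)=\frac1m\sum_{j=1}^m g_j(x)$, $F_i(x)=f_i(g(x))$, $F(x)=\frac1n\sum_{i=1}^nF_i(x)$. Let $R:\mathbb R^l\to\mathbb R$ be closed convex, $A\in\mathbb R^{p\times q}$, $B\in\mathbb R^{p\times l}$; the problem is $\min_{x,\omega}F(x)+R(\omega)$ s.t. $Ax+B\omega=0$, with optimal primal–dual solution $(x^*,\omega^*,\lambda^* )$. $\|\cdot\|$ is the Euclidean norm; for positive definite $H$, $\|x\|_H^2=x^THx$. Assumptions. (A1) Each $F_i$ is convex, $R$ is convex, an optimal primal–dual solution exists,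 and all $x$-points arising lie in a bounded set. (A4) There is $L_F>0$ with $\|(\partial g_j(x))^T\nabla f_i(g(x))-(\partial g_j(y))^T\nabla f_i(g(y))\|\le L_F\|x-y\|$ for all $i,j,x,y$. Algorithm 2 (inputs: integers $S,K\ge1$, $\rho>0$, stepsizes $\eta_s>0$, matrices $G_k$ per stage as below; initial $\tilde x^0=\hat x^0$, $\hat\omega^0$, $\hat\lambda^0$, $\hat G^0=I$). For $s=1,\dots,S$: set $\tilde x=\tilde x^{s-1}$, $x^0=\hat x^{s-1}$, $\omega^0=\hat\omega^{s-1}$, $\lambda^0=\hat\lambda^{s-1}$, $G_0=\hat G^{s-1}$; compute $g(\tilde x)$, $\nabla F(\tilde x)$. For $k=0,\dots,K-1$: (a) $\omega^{k+1}\in\arg\min_\omega R(\omega)+\langle\lambda^k,B\omega\rangle+\frac\rho2\|Ax^k+B\omega\|^2$; (b) compute $g(x^k)$ exactly; (c) draw $i_k$ uniform on $\{1,\dots,n\}$ and $j_k$ uniform on $\{1,\dots,m\}$, independently, and set $\nabla\hat F_{i_k}(x^k)=(\partial g_{j_k}(x^k))^T\nabla f_{i_k}(g(x^k))-(\partial g_{j_k}(\tilde x))^T\nabla f_{i_k}(g(\tilde x))+\nabla F(\tilde x)$; (d) $x^{k+1}=\arg\min_x\langle\nabla\hat F_{i_k}(x^k),x-x^k\rangle+\langle\lambda^k,Ax\rangle+\frac\rho2\|Ax+B\omega^{k+1}\|^2+\frac1{2\eta_s}\|x-x^k\|_{G_k}^2$; (e) $\lambda^{k+1}=\lambda^k+\rho(Ax^{k+1}+B\omega^{k+1})$.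 End of stage $s$: $\tilde x^s=\frac1K\sum_{k=1}^Kx^k$, $\tilde\omega^s=\frac1K\sum_{k=1}^K\omega^k$, $\hat x^s=x^K$, $\hat\omega^s=\omega^K$, $\hat\lambda^s=\lambda^K$, $\hat G^s=G_K$. Parameter choice (P1): $\eta_s=\frac1{(s+1)L_F}$, and in stage $s$ the matrices $G_0,\dots,G_K$ are scalar multiples of the identity with $\frac1sI=G_0\succeq G_1\succeq\dots\succeq G_{K-1}=G_K=\frac1{s+1}I$. *)

(* Defs.v *)
From HB Require Import structures.
From Stdlib Require Import Reals.
From mathcomp Require Import all_boot.

Set Implicit Arguments.
Unset Strict Implicit.
Unset Printing Implicit Defensive.

Local Open Scope R_scope.

Lemma Rplus_assoc' : associative Rplus.
Proof. by move=> x y z; rewrite Rplus_assoc. Qed.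
Lemma Rplus_comm' : commutative Rplus.
Proof. exact: Rplus_comm. Qed.
Lemma Rplus_0_l' : left_id 0 Rplus.
Proof. exact: Rplus_0_l. Qed.
HB.instance Definition _ := Monoid.isComLaw.Build R 0 Rplus
  Rplus_assoc' Rplus_comm' Rplus_0_l'.

Definition vec (d : nat) := 'I_d -> R.
Definition mat (a b : nat) := 'I_a -> 'I_b -> R.

Definition rsum (d : nat) (F : 'I_d -> R) : R := \big[Rplus/0]_(i < d) F i.

Definition dot (d : nat) (u v : vec d) : R := rsum (fun i => u i * v i).
Definition vnorm (d : nat) (u : vec d) : R := sqrt (dot u u).
Definition vadd (d : nat) (u v : vec d) : vec d := fun i => u i + v i.
Definition vsub (d : nat) (u v : vec d) : vec d := fun i => u i - v i.
Definition vscal (d : nat) (a : R) (u : vec d) : vec d := fun i => a * u i.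

Definition mv (a b : nat) (M : mat a b) (v : vec b) : vec a :=
  fun i => rsum (fun j => M i j * v j).
Definition mtv (a b : nat) (M : mat a b) (u : vec a) : vec b :=
  fun j => rsum (fun i => M i j * u i).
Definition msub (a b : nat) (M N : mat a b) : mat a b := fun i j => M i j - N i j.
Definition mfrob (a b : nat) (M : mat a b) : R :=
  sqrt (rsum (fun i => rsum (fun j => M i j ^ 2))).

(* u^T (c I) u : squared norm w.r.t. the scalar matrix c I *)
Definition sqnormS (d : nat) (c : R) (u : vec d) : R := dot u (vscal c u).

Definition ravg (k : nat) (F : 'I_k -> R) : R := / INR k * rsum F.
Definition vavg (d k : nat) (F : 'I_k -> vec d) : vec d :=
  fun i => / INR k * rsum (fun t => F t i).
Definition mavg (a b k : nat) (F : 'I_k -> mat a b) : mat a b :=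
  fun i j => / INR k * rsum (fun t => F t i j).

Definition has_grad (d : nat) (f : vec d -> R) (gf : vec d -> vec d) : Prop :=
  forall x eps, 0 < eps -> exists del, 0 < del /\
    forall y, vnorm (vsub y x) < del ->
      Rabs (f y - f x - dot (gf x) (vsub y x)) <= eps * vnorm (vsub y x).
Definition C1_grad (d : nat) (f : vec d -> R) (gf : vec d -> vec d) : Prop :=
  has_grad f gf /\
  forall x eps, 0 < eps -> exists del, 0 < del /\
    forall y, vnorm (vsub y x) < del -> vnorm (vsub (gf y) (gf x)) < eps.

Definition has_jac (a b : nat) (g : vec b -> vec a) (J : vec b -> mat a b) : Prop :=
  forall x eps, 0 < eps -> exists del, 0 < del /\
    forall y, vnorm (vsub y x) < del ->
      vnorm (vsub (vsub (g y) (g x)) (mv (J x) (vsub y x)))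
        <= eps * vnorm (vsub y x).
Definition C1_jac (a b : nat) (g : vec b -> vec a) (J : vec b -> mat a b) : Prop :=
  has_jac g J /\
  forall x eps, 0 < eps -> exists del, 0 < del /\
    forall y, vnorm (vsub y x) < del -> mfrob (msub (J y) (J x)) < eps.

Definition convex_fun (d : nat) (h : vec d -> R) : Prop :=
  forall x y t, 0 <= t <= 1 ->
    h (vadd (vscal t x) (vscal (1 - t) y)) <= t * h x + (1 - t) * h y.

Definition is_argmin (d : nat) (phi : vec d -> R) (z : vec d) : Prop :=
  forall y, phi z <= phi y.

Section Problem.
Variables (n m q r : nat).
Variables (g : 'I_m -> vec q -> vec r) (Jg : 'I_m -> vec q -> mat r q).
Variables (f : 'I_n -> vec r -> R) (gradf : 'I_n -> vec r -> vec r).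

Definition gmap (x : vec q) : vec r := vavg (fun j => g j x).
Definition Fi (i : 'I_n) (x : vec q) : R := f i (gmap x).
Definition Fobj (x : vec q) : R := ravg (fun i => Fi i x).
Definition Jgmap (x : vec q) : mat r q := mavg (fun j => Jg j x).
Definition gradF (x : vec q) : vec q :=
  vavg (fun i => mtv (Jgmap x) (gradf i (gmap x))).
Definition vrgrad (i : 'I_n) (j : 'I_m) (x xt : vec q) : vec q :=
  vadd (vsub (mtv (Jg j x) (gradf i (gmap x)))
             (mtv (Jg j xt) (gradf i (gmap xt))))
       (gradF xt).

Variables (p l : nat) (A : mat p q) (B : mat p l) (Reg : vec l -> R).

Definition Lag (x : vec q) (w : vec l) (lam : vec p) : R :=
  Fobj x + Reg w + dot lam (vadd (mv A x) (mv B w)).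

Definition opt_primal_dual (xs : vec q) (ws : vec l) (ls : vec p) : Prop :=
  (forall lam, Lag xs ws lam <= Lag xs ws ls) /\
  (forall x w, Lag xs ws ls <= Lag x w ls).

(* A run of Algorithm 2.  Stage s (1 <= s <= S), inner index k (0 <= k <= K):
   x s k = x^k, om s k = omega^k, lam s k = lambda^k of stage s;
   xt s = tilde x^s (xt 0 = tilde x^0);  G_k of stage s is (gam s k) * I;
   ik s k, jk s k are the sampled indices i_k, j_k (an arbitrary realization). *)
Definition alg2_run (S K : nat) (rho : R) (eta : nat -> R) (gam : nat -> nat -> R)
  (ik : nat -> nat -> 'I_n) (jk : nat -> nat -> 'I_m)
  (x0 : vec q) (om0 : vec l) (lam0 : vec p)
  (x : nat -> nat -> vec q) (om : nat -> nat -> vec l) (lam : nat -> nat -> vec p)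
  (xt : nat -> vec q) : Prop :=
  xt 0%N = x0 /\ x 1%N 0%N = x0 /\ om 1%N 0%N = om0 /\ lam 1%N 0%N = lam0 /\
  (forall s, (2 <= s <= S)%N ->
     x s 0%N = x s.-1 K /\ om s 0%N = om s.-1 K /\ lam s 0%N = lam s.-1 K) /\
  (forall s, (1 <= s <= S)%N ->
     xt s = (fun i => / INR K * \big[Rplus/0]_(1 <= k < K.+1) x s k i)) /\
  (forall s k, (1 <= s <= S)%N -> (k < K)%N ->
     is_argmin (fun w => Reg w + dot (lam s k) (mv B w)
                         + rho / 2 * vnorm (vadd (mv A (x s k)) (mv B w)) ^ 2)
               (om s k.+1) /\
     (* (d), with snapshot tilde x = tilde x^{s-1} *)
     is_argmin (fun z => dot (vrgrad (ik s k) (jk s k) (x s k) (xt s.-1)) (vsub z (x s k))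
                         + dot (lam s k) (mv A z)
                         + rho / 2 * vnorm (vadd (mv A z) (mv B (om s k.+1))) ^ 2
                         + / (2 * eta s) * sqnormS (gam s k) (vsub z (x s k)))
               (x s k.+1) /\
     lam s k.+1 = vadd (lam s k) (vscal rho (vadd (mv A (x s k.+1)) (mv B (om s k.+1))))).

End Problem.

(* Main.v *)
Require Import Defs.
From HB Require Import structures.
From Stdlib Require Import Reals.
From mathcomp Require Import all_boot.
From Stdlib Require Import Lra Lia FunctionalExtensionality.
Local Open Scope R_scope.

Set Implicit Arguments.
Unset Strict Implicit.


Lemma rsum_ext d (F G : 'I_d -> R) : (forall i, F i = G i) -> rsum F = rsum G.
Proof. by move=> h; rewrite /rsum; apply: eq_bigr => i _; apply: h. Qed.

Lemma rsum_add d (F G : 'I_d -> R) : rsum (fun i => F i + G i) = rsum F + rsum G.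
Proof. by rewrite /rsum big_split. Qed.

Lemma rsum_scal d c (F : 'I_d -> R) : rsum (fun i => c * F i) = c * rsum F.
Proof.
rewrite /rsum; apply: (big_rec2 (fun y1 y2 => y1 = c * y2)); first by ring.
by move=> i y1 y2 _ ->; ring.
Qed.

Lemma rsum_scalr d c (F : 'I_d -> R) : rsum (fun i => F i * c) = rsum F * c.
Proof.
rewrite Rmult_comm -rsum_scal; apply: rsum_ext => i; ring.
Qed.

Lemma rsum_opp d (F : 'I_d -> R) : rsum (fun i => - F i) = - rsum F.
Proof.
rewrite (rsum_ext (G := fun i => -1 * F i)); last by move=> i; ring.
rewrite rsum_scal; ring.
Qed.

Lemma rsum_sub d (F G : 'I_d -> R) : rsum (fun i => F i - G i) = rsum F - rsum G.
Proof.
rewrite (rsum_ext (G := fun i => F i + - G i)) // rsum_add rsum_opp; ring.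
Qed.

Lemma rsum_le d (F G : 'I_d -> R) : (forall i, F i <= G i) -> rsum F <= rsum G.
Proof.
move=> h; rewrite /rsum; apply: (big_rec2 (fun y1 y2 => y1 <= y2)); first lra.
by move=> i y1 y2 _ hy; have := h i; lra.
Qed.

Lemma rsum_ge0 d (F : 'I_d -> R) : (forall i, 0 <= F i) -> 0 <= rsum F.
Proof.
move=> h; rewrite /rsum; apply: (big_rec (fun y => 0 <= y)); first lra.
by move=> i y _ hy; have := h i; lra.
Qed.

Lemma rsum_const d c : rsum (fun _ : 'I_d => c) = INR d * c.
Proof.
rewrite /rsum big_const card_ord; elim: d => [|d IH]; first by rewrite /=; ring.
rewrite iterS IH S_INR; ring.
Qed.

Lemma rsum_swap a b (F : 'I_a -> 'I_b -> R) :
  rsum (fun i => rsum (fun j => F i j)) = rsum (fun j => rsum (fun i => F i j)).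
Proof. by rewrite /rsum exchange_big. Qed.

Lemma rsum_term d (F : 'I_d -> R) i0 : (forall i, 0 <= F i) -> F i0 <= rsum F.
Proof.
move=> h; rewrite /rsum (bigD1 i0) //=.
set Z := bigop _ _ _.
have : 0 <= Z.
  rewrite /Z; apply: (big_rec (fun y => 0 <= y)); first lra.
  by move=> i y _ hy; have := h i; lra.
lra.
Qed.
Lemma rsum_prod a b (F : 'I_a -> R) (G : 'I_b -> R) :
  rsum (fun i => rsum (fun j => F i * G j)) = rsum F * rsum G.
Proof.
rewrite -rsum_scalr; apply: rsum_ext => i; by rewrite rsum_scal.
Qed.

Lemma ravg_const k c : (0 < k)%N -> ravg (fun _ : 'I_k => c) = c.
Proof.
move=> hk; rewrite /ravg rsum_const; field.
apply: not_0_INR; by case: k hk.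
Qed.

Lemma ravg_le k (F : 'I_k -> R) c : (0 < k)%N -> (forall i, F i <= c) -> ravg F <= c.
Proof.
move=> hk h; rewrite -(ravg_const c hk) /ravg.
apply: Rmult_le_compat_l.
  apply/Rlt_le/Rinv_0_lt_compat/lt_0_INR; by case: k hk {h F} => // k _; lia.
by apply: rsum_le.
Qed.

Lemma vext d (u v : vec d) : (forall i, u i = v i) -> u = v.
Proof. move=> h; apply: functional_extensionality => i; exact: h. Qed.

Lemma dot_comm d (u v : vec d) : dot u v = dot v u.
Proof. by apply: rsum_ext => i; ring. Qed.
Lemma dot_addl d (u v w : vec d) : dot (vadd u v) w = dot u w + dot v w.
Proof. rewrite /dot -rsum_add; apply: rsum_ext => i; rewrite /vadd; ring. Qed.
Lemma dot_subl d (u v w : vec d) : dot (vsub u v) w = dot u w - dot v w.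
Proof. rewrite /dot -rsum_sub; apply: rsum_ext => i; rewrite /vsub; ring. Qed.
Lemma dot_scall d c (u w : vec d) : dot (vscal c u) w = c * dot u w.
Proof. rewrite /dot -rsum_scal; apply: rsum_ext => i; rewrite /vscal; ring. Qed.
Lemma dot_addr d (u v w : vec d) : dot w (vadd u v) = dot w u + dot w v.
Proof. by rewrite dot_comm dot_addl !(dot_comm w). Qed.
Lemma dot_subr d (u v w : vec d) : dot w (vsub u v) = dot w u - dot w v.
Proof. by rewrite dot_comm dot_subl !(dot_comm w). Qed.
Lemma dot_scalr d c (u w : vec d) : dot w (vscal c u) = c * dot w u.
Proof. by rewrite dot_comm dot_scall (dot_comm w). Qed.

Lemma dot_mv a b (M : mat a b) (u : vec a) (v : vec b) :
  dot u (mv M v) = dot (mtv M u) v.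
Proof.
rewrite /dot /mv /mtv.
rewrite (rsum_ext (G := fun i => rsum (fun j => u i * M i j * v j))); last first.
  by move=> i; rewrite -rsum_scal; apply: rsum_ext => j; ring.
rewrite rsum_swap; apply: rsum_ext => j.
by rewrite -rsum_scalr; apply: rsum_ext => i; ring.
Qed.

Lemma mv_add a b (M : mat a b) (u v : vec b) : mv M (vadd u v) = vadd (mv M u) (mv M v).
Proof. apply: vext => i; rewrite /mv /vadd -rsum_add; apply: rsum_ext => j; ring. Qed.
Lemma mv_scal a b (M : mat a b) c (u : vec b) : mv M (vscal c u) = vscal c (mv M u).
Proof. apply: vext => i; rewrite /mv /vscal -rsum_scal; apply: rsum_ext => j; ring. Qed.
Lemma mtv_add a b (M : mat a b) (u v : vec a) : mtv M (vadd u v) = vadd (mtv M u) (mtv M v).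
Proof. apply: vext => i; rewrite /mtv /vadd -rsum_add; apply: rsum_ext => j; ring. Qed.
Lemma mtv_scal a b (M : mat a b) c (u : vec a) : mtv M (vscal c u) = vscal c (mtv M u).
Proof. apply: vext => i; rewrite /mtv /vscal -rsum_scal; apply: rsum_ext => j; ring. Qed.

Lemma dot_ge0 d (u : vec d) : 0 <= dot u u.
Proof. apply: rsum_ge0 => i; nra. Qed.
Lemma vnorm_ge0 d (u : vec d) : 0 <= vnorm u.
Proof. exact: sqrt_pos. Qed.
Lemma vnorm_sq d (u : vec d) : vnorm u ^ 2 = dot u u.
Proof. by rewrite /vnorm pow2_sqrt //; apply: dot_ge0. Qed.
Lemma coord_sq d (u : vec d) i : u i ^ 2 <= dot u u.
Proof.
rewrite /dot; have -> : u i ^ 2 = u i * u i by ring.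
by apply: (@rsum_term _ (fun j => u j * u j)) => j; nra.
Qed.

Lemma cs_sq d (u v : vec d) : dot u v ^ 2 <= dot u u * dot v v.
Proof.
have H : 0 <= rsum (fun i => rsum (fun j => (u i * v j - u j * v i) ^ 2)).
  apply: rsum_ge0 => i /=; apply: rsum_ge0 => j /=; apply: pow2_ge_0.
have E : rsum (fun i => rsum (fun j => (u i * v j - u j * v i) ^ 2)) =
    2 * (dot u u * dot v v) - 2 * (dot u v ^ 2).
  rewrite (rsum_ext (G := fun i => rsum (fun j => (u i * u i) * (v j * v j))
         + rsum (fun j => (v i * v i) * (u j * u j))
         + (-2) * rsum (fun j => (u i * v i) * (u j * v j)))); last first.
    move=> i; rewrite -rsum_scal -!rsum_add; apply: rsum_ext => j; ring.
  rewrite !rsum_add rsum_scal !rsum_prod /dot; ring.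
lra.
Qed.

Lemma cs_abs d (u v : vec d) : Rabs (dot u v) <= vnorm u * vnorm v.
Proof.
rewrite /vnorm -sqrt_mult_alt; last exact: dot_ge0.
rewrite -sqrt_Rsqr_abs; apply: sqrt_le_1_alt.
have := cs_sq u v; rewrite /Rsqr; lra.
Qed.

Lemma cs d (u v : vec d) : dot u v <= vnorm u * vnorm v.
Proof. have := cs_abs u v; have := Rle_abs (dot u v); lra. Qed.

Lemma vnorm_scal d c (u : vec d) : vnorm (vscal c u) = Rabs c * vnorm u.
Proof.
rewrite /vnorm dot_scall dot_scalr -Rmult_assoc sqrt_mult_alt; last nra.
by rewrite -sqrt_Rsqr_abs.
Qed.

Lemma vnorm_triangle d (u v : vec d) : vnorm (vadd u v) <= vnorm u + vnorm v.
Proof.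
have h1 := vnorm_ge0 u; have h2 := vnorm_ge0 v.
rewrite -(sqrt_pow2 (vnorm u + vnorm v)); last lra.
rewrite /vnorm; apply: sqrt_le_1_alt.
rewrite dot_addl !dot_addr (dot_comm v u).
have := cs u v; rewrite -/(vnorm u) -/(vnorm v).
have := vnorm_sq u; have := vnorm_sq v; nra.
Qed.

Lemma vnorm_zero d : vnorm (fun _ : 'I_d => 0) = 0.
Proof.
rewrite /vnorm /dot (rsum_ext (G := fun _ => 0)); last by move=> i; ring.
by rewrite rsum_const Rmult_0_r sqrt_0.
Qed.

Lemma vnorm_sum_seq d k (F : 'I_k -> vec d) (s : seq 'I_k) :
  vnorm (fun i => \big[Rplus/0]_(t <- s) F t i) <= \big[Rplus/0]_(t <- s) vnorm (F t).
Proof.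
elim: s => [|a s IH].
  rewrite big_nil.
  have -> : (fun i : 'I_d => \big[Rplus/0]_(t <- [::]) F t i) = (fun _ => 0).
    by apply: vext => i; rewrite big_nil.
  rewrite vnorm_zero; lra.
have -> : (fun i : 'I_d => \big[Rplus/0]_(t <- a :: s) F t i) =
   vadd (F a) (fun i => \big[Rplus/0]_(t <- s) F t i).
  by apply: vext => i; rewrite big_cons.
rewrite big_cons; have := vnorm_triangle (F a) (fun i => \big[Rplus/0]_(t <- s) F t i).
lra.
Qed.

Lemma vnorm_vavg d k (F : 'I_k -> vec d) : vnorm (vavg F) <= ravg (fun t => vnorm (F t)).
Proof.
have -> : vavg F = vscal (/ INR k) (fun i => rsum (fun t => F t i)) by [].
rewrite vnorm_scal /ravg.
have h : 0 <= / INR k.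
  case: k F => [|k] F; first by rewrite /= Rinv_0; lra.
  by apply/Rlt_le/Rinv_0_lt_compat/lt_0_INR; lia.
rewrite Rabs_pos_eq //; apply: Rmult_le_compat_l => //.
exact: vnorm_sum_seq.
Qed.

Lemma dot_vavg d k (F : 'I_k -> vec d) (w : vec d) :
  dot (vavg F) w = ravg (fun t => dot (F t) w).
Proof.
rewrite /dot /vavg /ravg.
rewrite (rsum_ext (G := fun i => rsum (fun t => / INR k * (F t i * w i)))); last first.
  by move=> i; rewrite Rmult_assoc -rsum_scalr -rsum_scal; apply: rsum_ext => t; ring.
rewrite rsum_swap -rsum_scal; apply: rsum_ext => t; by rewrite rsum_scal.
Qed.

Lemma mtv_mavg a b k (F : 'I_k -> mat a b) (w : vec a) :
  mtv (mavg F) w = vavg (fun t => mtv (F t) w).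
Proof.
apply: vext => j; rewrite /mtv /mavg /vavg.
rewrite (rsum_ext (G := fun i => rsum (fun t => / INR k * (F t i j * w i)))); last first.
  by move=> i; rewrite Rmult_assoc -rsum_scalr -rsum_scal; apply: rsum_ext => t; ring.
rewrite rsum_swap -rsum_scal; apply: rsum_ext => t; by rewrite rsum_scal.
Qed.

Lemma mv_mavg a b k (F : 'I_k -> mat a b) (w : vec b) :
  mv (mavg F) w = vavg (fun t => mv (F t) w).
Proof.
apply: vext => i; rewrite /mv /mavg /vavg.
rewrite (rsum_ext (G := fun j => rsum (fun t => / INR k * (F t i j * w j)))); last first.
  by move=> j; rewrite Rmult_assoc -rsum_scalr -rsum_scal; apply: rsum_ext => t; ring.
rewrite rsum_swap -rsum_scal; apply: rsum_ext => t; by rewrite rsum_scal.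
Qed.

Lemma common_delta (I : finType) (Q : I -> R -> Prop) :
  (forall i e e', 0 < e' <= e -> Q i e -> Q i e') ->
  (forall i, exists e, 0 < e /\ Q i e) -> exists e, 0 < e /\ forall i, Q i e.
Proof.
move=> mono h.
suff: forall s : seq I, exists e, 0 < e /\ forall i, i \in s -> Q i e.
  case/(_ (enum I)) => e [he H]; exists e; split => // i; apply: H; by rewrite mem_enum.
elim => [|a s [e [he H]]]; first by exists 1; split => //; lra.
have [ea [hea Ha]] := h a.
exists (Rmin e ea); split; first by apply: Rmin_pos.
move=> i; rewrite in_cons => /orP [/eqP -> | hi].
  apply: (mono a ea) => //; split; [exact: Rmin_pos | exact: Rmin_r].
apply: (mono i e); last exact: H.
split; [exact: Rmin_pos | exact: Rmin_l].
Qed.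

Section Anal.
Variables (n m q r : nat) (hn : (1 <= n)%N) (hm : (1 <= m)%N).
Variables (g : 'I_m -> vec q -> vec r) (Jg : 'I_m -> vec q -> mat r q)
  (f : 'I_n -> vec r -> R) (gradf : 'I_n -> vec r -> vec r).
Hypothesis hg : forall j, C1_jac (g j) (Jg j).
Hypothesis hf : forall i, C1_grad (f i) (gradf i).

Lemma INRpos k : (1 <= k)%N -> 0 < INR k.
Proof. move=> hk; apply: lt_0_INR; by case: k hk => //; lia. Qed.

Lemma rsum_lin3 k (a b c : 'I_k -> R) u :
  rsum (fun j => a j - b j - u * c j) = rsum a - rsum b - u * rsum c.
Proof. by rewrite rsum_sub rsum_sub rsum_scal. Qed.

Lemma gj_der j z d : forall eps, 0 < eps -> exists del, 0 < del /\ forall u, Rabs u < del ->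
  vnorm (vsub (vsub (g j (vadd z (vscal u d))) (g j z)) (vscal u (mv (Jg j z) d)))
   <= eps * Rabs u.
Proof.
move=> eps he.
have hN := vnorm_ge0 d; set N := vnorm d in hN *.
have [del [hdel H]] := (hg j).1 z (eps / (N + 1)) ltac:(apply: Rdiv_lt_0_compat; lra).
exists (del / (N + 1)); split; first by apply: Rdiv_lt_0_compat; lra.
move=> u hu.
have E : vsub (vadd z (vscal u d)) z = vscal u d by apply: vext => i; rewrite /vsub /vadd /vscal; ring.
have Hu : vnorm (vsub (vadd z (vscal u d)) z) < del.
  rewrite E vnorm_scal -/N.
  have hu' : Rabs u * (N + 1) < del.
    have := Rmult_lt_compat_r (N + 1) _ _ ltac:(lra) hu.
    by rewrite /Rdiv Rmult_assoc Rinv_l; [rewrite Rmult_1_r | lra].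
  have := Rabs_pos u; nra.
have := H _ Hu; rewrite E -mv_scal vnorm_scal -/N.
move=> h; apply: (Rle_trans _ _ _ h).
have ha := Rabs_pos u.
have : eps / (N + 1) * N <= eps.
  have -> : eps / (N + 1) * N = eps * (N / (N + 1)) by rewrite /Rdiv; ring.
  have : N / (N + 1) <= 1.
    have h1 : 0 < / (N + 1) by apply: Rinv_0_lt_compat; lra.
    have -> : N / (N + 1) = 1 - / (N + 1) by field; lra.
    lra.
  nra.
nra.
Qed.

Lemma gmap_der z d : forall eps, 0 < eps -> exists del, 0 < del /\ forall u, Rabs u < del ->
  vnorm (vsub (vsub (gmap g (vadd z (vscal u d))) (gmap g z)) (vscal u (mv (Jgmap Jg z) d)))
   <= eps * Rabs u.
Proof.
move=> eps he.
have [del [hdel H]] := @common_delta _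
  (fun j del => forall u, Rabs u < del ->
     vnorm (vsub (vsub (g j (vadd z (vscal u d))) (g j z)) (vscal u (mv (Jg j z) d)))
       <= eps * Rabs u)
  ltac:(move=> j e e' he' He u hu; apply: He; lra)
  (fun j => gj_der j z d he).
exists del; split => // u hu.
have -> : vsub (vsub (gmap g (vadd z (vscal u d))) (gmap g z)) (vscal u (mv (Jgmap Jg z) d))
  = vavg (fun j => vsub (vsub (g j (vadd z (vscal u d))) (g j z)) (vscal u (mv (Jg j z) d))).
  rewrite /Jgmap mv_mavg; apply: vext => i.
  rewrite /vsub /vscal /vavg /gmap /vavg.
  rewrite rsum_lin3; ring.
apply: (Rle_trans _ _ _ (vnorm_vavg _)).
apply: ravg_le => // j; exact: H.
Qed.

Lemma phi_der i y0 d t :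
  derivable_pt_lim (fun t => Fi g f i (vadd y0 (vscal t d))) t
    (dot (mtv (Jgmap Jg (vadd y0 (vscal t d))) (gradf i (gmap g (vadd y0 (vscal t d))))) d).
Proof.
move=> eps he.
set z := vadd y0 (vscal t d).
set v := mv (Jgmap Jg z) d.
set w := gradf i (gmap g z).
have hv := vnorm_ge0 v; have hw := vnorm_ge0 w.
set K := vnorm v + 1; set W := vnorm w + 1.
have hK : 0 < K by rewrite /K; lra.
have hW : 0 < W by rewrite /W; lra.
have [df [hdf Hf]] := (hf i).1 (gmap g z) (eps / (4 * K)) ltac:(apply: Rdiv_lt_0_compat; lra).
have he2 : 0 < Rmin 1 (eps / (4 * W)).
  by apply: Rmin_pos; [lra | apply: Rdiv_lt_0_compat; lra].
have [dg [hdg Hg]] := gmap_der z d he2.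
have hd : 0 < Rmin dg (df / K) by apply: Rmin_pos => //; apply: Rdiv_lt_0_compat.
exists (mkposreal _ hd) => h hh0 hh /=.
have hh1 : Rabs h < dg by have := Rmin_l dg (df / K); simpl in hh; lra.
have hh2 : Rabs h * K < df.
  have : Rabs h < df / K by have := Rmin_r dg (df / K); simpl in hh; lra.
  move=> h2; have := Rmult_lt_compat_r K _ _ hK h2.
  by rewrite /Rdiv Rmult_assoc Rinv_l; [rewrite Rmult_1_r | lra].
have hpos : 0 < Rabs h by apply: Rabs_pos_lt.
have Ey : vadd y0 (vscal (t + h) d) = vadd z (vscal h d).
  by apply: vext => k; rewrite /z /vadd /vscal; ring.
rewrite /Fi Ey -/z.
set Hv := vsub (gmap g (vadd z (vscal h d))) (gmap g z).
have HG := Hg h hh1; rewrite -/v -/Hv in HG.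
have hm1 : Rmin 1 (eps / (4 * W)) <= 1 by apply: Rmin_l.
have hm2 : Rmin 1 (eps / (4 * W)) <= eps / (4 * W) by apply: Rmin_r.
have hHv : vnorm Hv <= K * Rabs h.
  have -> : Hv = vadd (vscal h v) (vsub Hv (vscal h v)).
    by apply: vext => k; rewrite /vadd /vsub /vscal; ring.
  apply: (Rle_trans _ _ _ (vnorm_triangle _ _)); rewrite vnorm_scal.
  have := Rabs_pos h; rewrite /K; nra.
have hHv2 : vnorm (vsub (gmap g (vadd z (vscal h d))) (gmap g z)) < df.
  rewrite -/Hv; nra.
have F1 := Hf _ hHv2; rewrite -/Hv -/w in F1.
have F2 : Rabs (dot w Hv - h * dot w v) <= eps / 4 * Rabs h.
  have -> : dot w Hv - h * dot w v = dot w (vsub Hv (vscal h v)) by rewrite dot_subr dot_scalr.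
  apply: (Rle_trans _ _ _ (cs_abs _ _)).
  have hwW : vnorm w <= W by rewrite /W; lra.
  have hx := vnorm_ge0 (vsub Hv (vscal h v)).
  have : vnorm (vsub Hv (vscal h v)) <= eps / (4 * W) * Rabs h.
    have := Rabs_pos h; nra.
  move=> hy.
  have : vnorm w * vnorm (vsub Hv (vscal h v)) <= W * (eps / (4 * W) * Rabs h).
    apply: Rmult_le_compat => //.
  have -> : W * (eps / (4 * W) * Rabs h) = eps / 4 * Rabs h by field; lra.
  done.
have F3 : eps / (4 * K) * vnorm Hv <= eps / 4 * Rabs h.
  have -> : eps / 4 * Rabs h = eps / (4 * K) * (K * Rabs h) by field; lra.
  apply: Rmult_le_compat_l => //; apply/Rlt_le/Rdiv_lt_0_compat; lra.
rewrite -dot_mv -/v.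
set A := f i (gmap g (vadd z (vscal h d))); set B := f i (gmap g z).
fold A B in F1.
have E : ((A - B) / h - dot w v) * h = (A - B - dot w Hv) + (dot w Hv - h * dot w v).
  by field.
have : Rabs ((A - B) / h - dot w v) * Rabs h < eps * Rabs h.
  rewrite -Rabs_mult E.
  apply: (Rle_lt_trans _ _ _ (Rabs_triang _ _)).
  nra.
move=> hfin.
nra.
Qed.
End Anal.

Lemma dpl_ext (f1 f2 : R -> R) x l1 l2 : (forall t, f1 t = f2 t) -> l1 = l2 ->
  derivable_pt_lim f1 x l1 -> derivable_pt_lim f2 x l2.
Proof.
move=> h <-; have -> : f2 = f1 by apply: functional_extensionality => t; rewrite h.
done.
Qed.

Lemma dpl_sum_seq k (Fs : 'I_k -> R -> R) (D : 'I_k -> R) t (s : seq 'I_k) :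
  (forall i, derivable_pt_lim (Fs i) t (D i)) ->
  derivable_pt_lim (fun t => \big[Rplus/0]_(i <- s) Fs i t) t (\big[Rplus/0]_(i <- s) D i).
Proof.
move=> h; elim: s => [|a s IH].
  apply: (dpl_ext (f1 := fct_cte 0)) (derivable_pt_lim_const 0 t).
    by move=> x; rewrite big_nil.
  by rewrite big_nil.
apply: (dpl_ext _ _ (derivable_pt_lim_plus _ _ _ _ _ (h a) IH)).
  by move=> x; rewrite big_cons.
by rewrite big_cons.
Qed.

Lemma dpl_rsum k (Fs : 'I_k -> R -> R) (D : 'I_k -> R) t :
  (forall i, derivable_pt_lim (Fs i) t (D i)) ->
  derivable_pt_lim (fun t => rsum (fun i => Fs i t)) t (rsum D).
Proof. move=> h; exact: dpl_sum_seq. Qed.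

Lemma ravg_sub k (F G : 'I_k -> R) : ravg F - ravg G = ravg (fun i => F i - G i).
Proof. by rewrite /ravg rsum_sub; ring. Qed.

Section Anal2.
Variables (n m q r : nat) (hn : (1 <= n)%N) (hm : (1 <= m)%N).
Variables (g : 'I_m -> vec q -> vec r) (Jg : 'I_m -> vec q -> mat r q)
  (f : 'I_n -> vec r -> R) (gradf : 'I_n -> vec r -> vec r).
Hypothesis hg : forall j, C1_jac (g j) (Jg j).
Hypothesis hf : forall i, C1_grad (f i) (gradf i).
Variable LF : R.
Hypothesis hLF : 0 < LF.
Hypothesis hA4 : forall i j x y,
     vnorm (vsub (mtv (Jg j x) (gradf i (gmap g x)))
                 (mtv (Jg j y) (gradf i (gmap g y))))
       <= LF * vnorm (vsub x y).
Hypothesis hFconv : forall i, convex_fun (Fi g f i).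

Lemma Fobj_der y0 d t :
  derivable_pt_lim (fun t => Fobj g f (vadd y0 (vscal t d))) t
    (dot (gradF g Jg gradf (vadd y0 (vscal t d))) d).
Proof.
have H := dpl_rsum (fun i => phi_der hm hg hf i y0 d t).
have H2 := derivable_pt_lim_scal _ (/ INR n) _ _ H.
apply: (dpl_ext _ _ H2) => //.
by rewrite /gradF dot_vavg.
Qed.

Lemma gradF_dot x d :
  dot (gradF g Jg gradf x) d =
  ravg (fun i => ravg (fun j => dot (mtv (Jg j x) (gradf i (gmap g x))) d)).
Proof.
rewrite /gradF dot_vavg /ravg; congr (_ * _); apply: rsum_ext => i.
by rewrite /Jgmap mtv_mavg dot_vavg.
Qed.

Lemma gradF_lip a b d :
  dot (vsub (gradF g Jg gradf a) (gradF g Jg gradf b)) d <= LF * vnorm (vsub a b) * vnorm d.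
Proof.
rewrite dot_subl !gradF_dot ravg_sub; apply: ravg_le => // i.
rewrite ravg_sub; apply: ravg_le => // j.
rewrite -dot_subl; apply: (Rle_trans _ _ _ (cs _ _)).
apply: Rmult_le_compat_r; [exact: vnorm_ge0 | exact: hA4].
Qed.

Lemma descent x y :
  Fobj g f y <= Fobj g f x + dot (gradF g Jg gradf x) (vsub y x)
                + LF / 2 * vnorm (vsub y x) ^ 2.
Proof.
set d := vsub y x; set D0 := dot (gradF g Jg gradf x) d; set N := vnorm d ^ 2.
set psi := fun t => Fobj g f (vadd x (vscal t d)) - t * D0 - LF / 2 * N * t ^ 2.
set psi' := fun t => dot (gradF g Jg gradf (vadd x (vscal t d))) d - D0 - LF * N * t.
have Hd : forall c, derivable_pt_lim psi c (psi' c).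
  move=> c.
  have H1 := Fobj_der x d c.
  have H2 := derivable_pt_lim_scal _ D0 _ _ (derivable_pt_lim_id c).
  have H3 := derivable_pt_lim_scal _ (LF / 2 * N) _ _ (derivable_pt_lim_pow c 2).
  have H4 := derivable_pt_lim_minus _ _ _ _ _ (derivable_pt_lim_minus _ _ _ _ _ H1 H2) H3.
  apply: (dpl_ext _ _ H4).
    by move=> t; rewrite /psi /mult_real_fct /minus_fct; unfold Ranalysis1.id; ring.
  rewrite /psi' /=; field.
have [c [E hc]] := MVT_cor2 psi psi' 0 1 ltac:(lra) (fun c _ => Hd c).
have E0 : vadd x (vscal 0 d) = x by apply: vext => i; rewrite /vadd /vscal; ring.
have E1 : vadd x (vscal 1 d) = y by apply: vext => i; rewrite /vadd /vscal /d /vsub; ring.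
have Hle : psi' c <= 0.
  rewrite /psi'.
  have := gradF_lip (vadd x (vscal c d)) x d.
  have -> : vsub (vadd x (vscal c d)) x = vscal c d.
    by apply: vext => i; rewrite /vadd /vscal /vsub; ring.
  rewrite vnorm_scal Rabs_pos_eq; last lra.
  rewrite dot_subl -/D0 /N /=.
  have := vnorm_ge0 d; nra.
move: E; rewrite /psi E0 E1 -/d; nra.
Qed.

Lemma Fobj_convex : convex_fun (Fobj g f).
Proof.
move=> a b t ht; rewrite /Fobj /ravg.
have hn' : 0 <= / INR n by apply/Rlt_le/Rinv_0_lt_compat; exact: INRpos hn.
have := @rsum_le _ (fun i => Fi g f i (vadd (vscal t a) (vscal (1 - t) b)))
  (fun i => t * Fi g f i a + (1 - t) * Fi g f i b) (fun i => hFconv i a b ht).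
rewrite rsum_add !rsum_scal => h.
have := Rmult_le_compat_l _ _ _ hn' h; nra.
Qed.

Lemma grad_ineq x xs :
  Fobj g f x + dot (gradF g Jg gradf x) (vsub xs x) <= Fobj g f xs.
Proof.
set d := vsub xs x; set D0 := dot (gradF g Jg gradf x) d.
set phi := fun t => Fobj g f (vadd x (vscal t d)).
have Hd := Fobj_der x d 0.
have E0 : vadd x (vscal 0 d) = x by apply: vext => i; rewrite /vadd /vscal; ring.
rewrite E0 -/D0 in Hd.
have Hc : forall t, 0 <= t <= 1 -> phi t <= t * Fobj g f xs + (1 - t) * Fobj g f x.
  move=> t ht; rewrite /phi.
  have -> : vadd x (vscal t d) = vadd (vscal t xs) (vscal (1 - t) x).
    by apply: vext => i; rewrite /vadd /vscal /d /vsub; ring.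
  exact: Fobj_convex.
apply: Rnot_lt_le => hlt.
have he : 0 < D0 - (Fobj g f xs - Fobj g f x) by lra.
have [del Hdel] := Hd _ he.
have hdp := cond_pos del.
set u := Rmin (del / 2) (1 / 2).
have hu0 : 0 < u by apply: Rmin_pos; lra.
have hu1 : u <= 1 / 2 by apply: Rmin_r.
have hu2 : u <= del / 2 by apply: Rmin_l.
have := Hdel u ltac:(lra) ltac:(rewrite Rabs_pos_eq; lra).
rewrite Rplus_0_l E0.
have := Hc u ltac:(lra).
rewrite /phi => hcu habs.
have := Rabs_def2 _ _ habs => [[h1 h2]].
have : (Fobj g f (vadd x (vscal u d)) - Fobj g f x) / u <= Fobj g f xs - Fobj g f x.
  apply: (Rmult_le_reg_r u) => //.
  rewrite /Rdiv Rmult_assoc Rinv_l; lra.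
lra.
Qed.
End Anal2.

Lemma gam_mono (gam : nat -> R) K :
  (forall k, (k < K)%N -> gam k.+1 <= gam k) -> forall k, (k <= K)%N -> gam K <= gam k.
Proof.
move=> h.
have H : forall i, (i <= K)%N -> gam K <= gam (K - i)%N.
  elim => [|i IH] hi; first by rewrite subn0; lra.
  have hi' : (i < K)%N by [].
  have := IH (ltnW hi'); rewrite -(subnSK hi').
  have := h (K - i.+1)%N; rewrite subnSK // => h1.
  have := h1 (leq_subr _ _); lra.
move=> k hk; have := H (K - k)%N (leq_subr _ _); by rewrite subKn.
Qed.

Lemma quad_identity q p (A : mat p q) (c : vec p) (a xk x' w : vec q) (lam : vec p)
   rho eta gam : eta <> 0 ->
  let Phi := fun z => dot a (vsub z xk) + dot lam (mv A z)
     + rho / 2 * vnorm (vadd (mv A z) c) ^ 2 + / (2 * eta) * sqnormS gam (vsub z xk) in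
  let G := vadd (vadd a (mtv A lam))
       (vadd (vscal rho (mtv A (vadd (mv A x') c))) (vscal (gam / eta) (vsub x' xk))) in
  Phi (vadd x' w) = Phi x' + dot G w + rho / 2 * dot (mv A w) (mv A w)
                    + gam / (2 * eta) * dot w w.
Proof.
move=> heta Phi G; rewrite /Phi /G.
set P := vadd (mv A x') c; set e := vsub x' xk.
have E1 : vsub (vadd x' w) xk = vadd e w by apply: vext => i; rewrite /vsub /vadd /e /vsub; ring.
have E2 : vadd (mv A (vadd x' w)) c = vadd P (mv A w).
  by rewrite mv_add; apply: vext => i; rewrite /vadd /P /vadd; ring.
rewrite E1 E2 mv_add -/e -/P.
clearbody e P.
rewrite !vnorm_sq /sqnormS !dot_scalr.
rewrite !dot_addl !dot_addr !dot_scall.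
rewrite -!(dot_mv A) (dot_comm (mv A w) P).
rewrite (dot_comm w e); field; done.
Qed.

Lemma quad_opt q p (A : mat p q) (c : vec p) (a xk x' : vec q) (lam : vec p) rho eta gam :
  0 <= rho -> 0 < eta -> 0 < gam ->
  is_argmin (fun z => dot a (vsub z xk) + dot lam (mv A z)
     + rho / 2 * vnorm (vadd (mv A z) c) ^ 2 + / (2 * eta) * sqnormS gam (vsub z xk)) x' ->
  forall i, vadd (vadd a (mtv A lam))
    (vadd (vscal rho (mtv A (vadd (mv A x') c))) (vscal (gam / eta) (vsub x' xk))) i = 0.
Proof.
move=> hrho heta hgam hmin.
set G := vadd (vadd a (mtv A lam))
    (vadd (vscal rho (mtv A (vadd (mv A x') c))) (vscal (gam / eta) (vsub x' xk))).
set N := dot G G; set M := dot (mv A G) (mv A G).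
have hN := dot_ge0 G; have hM := dot_ge0 (mv A G); rewrite -/N -/M in hN hM.
set C := rho / 2 * M + gam / (2 * eta) * N.
have hC : 0 <= C.
  rewrite /C; have : 0 <= gam / (2 * eta) by apply/Rlt_le/Rdiv_lt_0_compat; lra.
  nra.
have Ht : forall t, 0 < t -> 0 <= - t * N + t ^ 2 * C.
  move=> t ht.
  have := quad_identity A c a xk x' (vscal (-t) G) lam rho gam (Rgt_not_eq _ _ heta).
  cbv beta zeta => E.
  have := hmin (vadd x' (vscal (- t) G)); cbv beta => H.
  rewrite E -/G dot_scalr mv_scal dot_scalr dot_scall dot_scalr dot_scall -/N -/M in H.
  rewrite /C; nra.
have N0 : N = 0.
  apply: Rle_antisym => //; apply: Rnot_lt_le => hNp.
  set t := N / (2 * (C + 1)).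
  have ht : 0 < t by apply: Rdiv_lt_0_compat; lra.
  have htC : t * C <= N / 2.
    have -> : t * C = N / 2 * (C / (C + 1)) by rewrite /t; field; lra.
    have : C / (C + 1) <= 1.
      have h1 : 0 < / (C + 1) by apply: Rinv_0_lt_compat; lra.
      have -> : C / (C + 1) = 1 - / (C + 1) by field; lra.
      lra.
    nra.
  have := Ht t ht; nra.
move=> i; have := coord_sq G i; rewrite -/N N0 => h.
nra.
Qed.

Unset Implicit Arguments.


Theorem lemma7
  (n m p q r l : nat)
  (hn : (1 <= n)%N) (hm : (1 <= m)%N) (hp : (1 <= p)%N)
  (hq : (1 <= q)%N) (hr : (1 <= r)%N) (hl : (1 <= l)%N)
  (g : 'I_m -> vec q -> vec r) (Jg : 'I_m -> vec q -> mat r q)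
  (f : 'I_n -> vec r -> R) (gradf : 'I_n -> vec r -> vec r)
  (Reg : vec l -> R) (A : mat p q) (B : mat p l)
  (* smoothness of the data *)
  (hg : forall j, C1_jac (g j) (Jg j))
  (hf : forall i, C1_grad (f i) (gradf i))
  (* (A1) *)
  (hFconv : forall i, convex_fun (Fi g f i))
  (hRconv : convex_fun Reg)
  (xs : vec q) (ws : vec l) (ls : vec p)
  (hopt : opt_primal_dual g f A B Reg xs ws ls)
  (* (A4) *)
  (LF : R) (hLF : 0 < LF)
  (hA4 : forall i j x y,
     vnorm (vsub (mtv (Jg j x) (gradf i (gmap g x)))
                 (mtv (Jg j y) (gradf i (gmap g y))))
       <= LF * vnorm (vsub x y))
  (* Algorithm 2 *)
  (S K : nat) (hS : (1 <= S)%N) (hK : (1 <= K)%N) (rho : R) (hrho : 0 < rho)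
  (eta : nat -> R) (gam : nat -> nat -> R)
  (ik : nat -> nat -> 'I_n) (jk : nat -> nat -> 'I_m)
  (x0 : vec q) (om0 : vec l) (lam0 : vec p)
  (x : nat -> nat -> vec q) (om : nat -> nat -> vec l) (lam : nat -> nat -> vec p)
  (xt : nat -> vec q)
  (hrun : alg2_run g Jg gradf A B Reg S K rho eta gam ik jk x0 om0 lam0 x om lam xt)
  (* (A1): all x-points arising lie in a bounded set *)
  (hbdd : exists M, (forall s k, (s <= S)%N -> (k <= K)%N -> vnorm (x s k) <= M) /\
                    (forall s, (s <= S)%N -> vnorm (xt s) <= M))
  (* (P1) *)
  (heta : forall s, (1 <= s <= S)%N -> eta s = / (INR s.+1 * LF))
  (hG : forall s, (1 <= s <= S)%N ->
     gam s 0%N = / INR s /\ gam s K.-1 = / INR s.+1 /\ gam s K = / INR s.+1 /\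
     (forall k, (k < K)%N -> gam s k.+1 <= gam s k))
  (s k : nat) (hs : (1 <= s <= S)%N) (hk : (k < K)%N) :
  let ghat := vrgrad g Jg gradf (ik s k) (jk s k) (x s k) (xt s.-1) in
  let mu := vadd ghat (mtv A (lam s k.+1)) in
  x s k.+1 = vsub (x s k) (vscal (eta s) (vscal (/ gam s k) mu)) /\
  - 2 * eta s * dot mu (vsub (x s k) xs) + eta s ^ 2 * sqnormS (/ gam s k) mu
  <= - 2 * eta s * (Fobj g f (x s k.+1) - Fobj g f xs)
     - 2 * eta s * dot (vsub ghat (gradF g Jg gradf (x s k))) (vsub (x s k.+1) xs)
     + 2 * eta s * dot (mtv A (lam s k.+1)) (vsub xs (x s k.+1)).
Proof.
move=> ghat mu.
case: hrun => _ [_ [_ [_ [_ [_ hstep]]]]].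
have [_ [hx hlam]] := hstep s k hs hk.
have [hg0 [hgK1 [hgK hmono]]] := hG s hs.
have heta' := heta s hs.
have hS1 : 0 < INR s.+1 by apply: lt_0_INR; lia.
have hetap : 0 < eta s.
  rewrite heta'; apply: Rinv_0_lt_compat; nra.
have hgKp : 0 < gam s K by rewrite hgK; apply: Rinv_0_lt_compat.
have hgk : gam s K <= gam s k := gam_mono hmono (ltnW hk).
have hgp : 0 < gam s k by lra.
have hLe : LF * eta s <= gam s k.
  have -> : LF * eta s = gam s K by rewrite heta' hgK; field; lra.
  done.
have hqo := quad_opt (Rlt_le _ _ hrho) hetap hgp hx.
have hlam' : mtv A (lam s k.+1) = vadd (mtv A (lam s k))
    (vscal rho (mtv A (vadd (mv A (x s k.+1)) (mv B (om s k.+1))))).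
  by rewrite hlam mtv_add mtv_scal.
have hmu : forall i, mu i = - (gam s k / eta s) * (x s k.+1 i - x s k i).
  move=> i; have := hqo i; rewrite /mu hlam' /vadd /vscal /vsub /= => h.
  rewrite /ghat; lra.
have hx' : x s k.+1 = vsub (x s k) (vscal (eta s) (vscal (/ gam s k) mu)).
  apply: vext => i; rewrite /vsub /vscal hmu; field; lra.
split => //.
set e := eta s in hetap hLe hx' hmu *.
set gm := gam s k in hgp hLe hx' hmu *.
set x' := x s k.+1 in hx' hmu *.
set xk := x s k in hx' hmu *.
set b := mtv A (lam s k.+1).
set gF := gradF g Jg gradf xk.
set d := vsub x' xk.
set X := vsub x' xs.
set Nm := dot mu mu.
have hN : 0 <= Nm := dot_ge0 mu.
have Hd : d = vscal (- (e / gm)) mu.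
  apply: vext => i; rewrite /d /vsub /vscal hmu; field; lra.
have q1a : dot mu X = dot ghat X + dot b X by rewrite /mu dot_addl.
have q1 : dot mu (vsub xk xs) = dot ghat X + dot b X + (e / gm) * Nm.
  have -> : vsub xk xs = vsub X d by apply: vext => i; rewrite /X /d /vsub; ring.
  rewrite dot_subr q1a Hd dot_scalr -/Nm; ring.
have q2 : sqnormS (/ gm) mu = / gm * Nm by rewrite /sqnormS dot_scalr.
have q3 : dot (vsub ghat gF) X = dot ghat X - dot gF X by rewrite dot_subl.
have q4 : dot b (vsub xs x') = - dot b X.
  have -> : vsub xs x' = vscal (-1) X by apply: vext => i; rewrite /X /vsub /vscal; ring.
  rewrite dot_scalr; ring.
have hD := descent hn hm hg hf hA4 xk x'.
have hdd : vnorm d ^ 2 = (e / gm) * ((e / gm) * Nm).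
  by rewrite vnorm_sq Hd dot_scall dot_scalr -/Nm; ring.
rewrite -/d -/gF hdd in hD.
have hC := grad_ineq hn hm hg hf hFconv xk xs.
have E2 : vsub xs xk = vsub d X by apply: vext => i; rewrite /X /d /vsub; ring.
rewrite -/gF E2 dot_subr in hC.
rewrite q1 q2 q3 q4.
set kap := e / gm.
have hk1 : e ^ 2 * (/ gm * Nm) = e * kap * Nm by rewrite /kap; field; lra.
have hk2 : LF * kap <= 1.
  rewrite /kap; apply: (Rmult_le_reg_r gm) => //.
  have -> : LF * (e / gm) * gm = LF * e by field; lra.
  lra.
have hekN : 0 <= e * kap * Nm.
  have : 0 < kap by rewrite /kap; apply: Rdiv_lt_0_compat.
  move=> hkp; apply: Rmult_le_pos => //; apply: Rmult_le_pos; lra.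
have hk3 : e * kap * Nm * (LF * kap) <= e * kap * Nm.
  have := Rmult_le_compat_l _ _ _ hekN hk2; lra.
set F1 := Fobj g f x' in hD *; set Fk := Fobj g f xk in hD hC *; set Fs := Fobj g f xs in hC *.
have hD2 : 2 * e * (F1 - Fs) <= 2 * e * dot gF X + e * kap * Nm * (LF * kap).
  have h : F1 - Fs <= dot gF X + LF / 2 * (- kap * - kap * Nm).
    rewrite /kap; lra.
  have := Rmult_le_compat_l (2 * e) _ _ ltac:(lra) h.
  have -> : 2 * e * (dot gF X + LF / 2 * (- kap * - kap * Nm)) =
            2 * e * dot gF X + e * kap * Nm * (LF * kap) by field.
  done.
rewrite hk1.
have -> : - 2 * e * (dot ghat X + dot b X + kap * Nm) = - 2 * e * dot ghat X - 2 * e * dot b X - 2 * (e * kap * Nm) by ring.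
have -> : - 2 * e * (F1 - Fs) - 2 * e * (dot ghat X - dot gF X) + 2 * e * - dot b X
   = - (2 * e * (F1 - Fs)) - 2 * e * dot ghat X + 2 * e * dot gF X - 2 * e * dot b X by ring.
lra.
Qed.
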